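(* Let $q$ be a prime power and let $\mathcal{A}$ be an essential free arrangement in $\mathbb{F}_q^3$ with exponents $(1,d_2,d_3)$, where $d_2\leq d_3$. Then $d_2\leq q$.
   Context: A (central) hyperplane arrangement $\mathcal{A}$ in $V=\mathbb{K}^\ell$ is a finite set of codimension-one linear subspaces; it is essential if the intersection of all its hyperplanes is $\{0\}$. Let $S=\mathbb{K}[x_1,\dots,x_\ell]$ be the polynomial ring of $V$, and for each $H\in\mathcal{A}$ fix a nonzero linear form $\alpha_H$ with kernel $H$. $\mathrm{Der}_V=\bigoplus_i S\,\partial/\partial x_i$ is the $S$-module of polynomial vector fields. The module of logarithmic vector fields is $D(\mathcal{A})=\{\delta\in \mathrm{Der}_V : \delta(\alpha_H)\in\alpha_H S \text{ for all } H\in\mathcal{A}\}$. $\mathcal{A}$ is free if $D(\mathcal{A})$ is a free $S$-module; then it has a basis of homogeneous (polynomial-degree) elements, and the multiset of their degrees (the degree of $\sum f_i\partial/\partial x_i$ being the common degree of the homogeneous coefficients $f_i$) is called the exponents of $\mathcal{A}$. *)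

(* Defs.v *)
From HB Require Import structures.
From mathcomp Require Import all_boot all_order all_algebra.
From mathcomp Require Import mpoly.
Set Implicit Arguments. Unset Strict Implicit. Unset Printing Implicit Defensive.
Import GRing.Theory.
Local Open Scope ring_scope.

(* A polynomial vector field  sum_i f_i d/dx_i  on K^l, as its coefficient
   family (f_i)_{i < l}. *)
Definition vfield (K : fieldType) (l : nat) := 'I_l -> {mpoly K[l]}.

Definition vf_apply (K : fieldType) (l : nat) (delta : vfield K l)
  (p : {mpoly K[l]}) : {mpoly K[l]} :=
  \sum_(i < l) delta i * p^`M(i).

Definition linform (K : fieldType) (l : nat) (a : {mpoly K[l]}) : Prop :=
  a != 0 /\ a \is 1.-homog.

(* A central arrangement in K^l, given by a list of defining linear forms
   alpha_H, one for each hyperplane H, the hyperplanes being pairwise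
   distinct (i.e. the forms are pairwise non-proportional). *)
Definition arrangement (K : fieldType) (l : nat) (A : seq {mpoly K[l]}) : Prop :=
  (forall a, a \in A -> linform a) /\
  (forall i j : nat, (i < size A)%N -> (j < size A)%N -> i <> j ->
     forall c : K, nth 0 A i != c *: nth 0 A j).

Definition essential (K : fieldType) (l : nat) (A : seq {mpoly K[l]}) : Prop :=
  forall v : 'I_l -> K, (forall a, a \in A -> a.@[v] = 0) -> v = (fun _ => 0).

Definition logder (K : fieldType) (l : nat) (A : seq {mpoly K[l]})
  (delta : vfield K l) : Prop :=
  forall a, a \in A -> exists g : {mpoly K[l]}, vf_apply delta a = a * g.

Definition vf_homog (K : fieldType) (l : nat) (d : nat) (delta : vfield K l) : Prop :=
  forall i, delta i \is d.-homog.

Definition logder_basis (K : fieldType) (l : nat) (A : seq {mpoly K[l]})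
  (theta : 'I_l -> vfield K l) : Prop :=
  [/\ forall j, logder A (theta j),
      forall delta, logder A delta ->
        exists f : 'I_l -> {mpoly K[l]},
          forall i, delta i = \sum_(j < l) f j * theta j i
    &
      forall f : 'I_l -> {mpoly K[l]},
        (forall i, \sum_(j < l) f j * theta j i = 0) -> forall j, f j = 0].

(* A is free with exponents e = (e_1, ..., e_l): D(A) has an S-basis of
   homogeneous vector fields whose degrees are e (as a list; the order is
   immaterial since a basis can be permuted). *)
Definition free_with_exponents (K : fieldType) (l : nat) (A : seq {mpoly K[l]})
  (e : seq nat) : Prop :=
  size e = l /\
  exists theta : 'I_l -> vfield K l,
    logder_basis A theta /\ forall j : 'I_l, vf_homog (nth 0%N e j) (theta j).

(* Main.v *)
Require Import Defs.
From HB Require Import structures.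
From mathcomp Require Import all_boot all_order all_algebra.
From mathcomp Require Import mpoly.
From mathcomp Require Import all_field zify.
Import GRing.Theory.
Local Open Scope ring_scope.

Section S.
Variable F : finFieldType.
Local Notation P := {mpoly F[3]}.

Lemma card_pnat : exists2 p, p \in [pchar F] & p.-nat #|F|.
Proof.
have [p pr cp] := finPcharP F.
exists p => //.
have := card_pprimeChar cp => /= ->.
by rewrite pnatX pnat_id.
Qed.

Lemma frob_sum (I : Type) (s : seq I) (f : I -> {mpoly F[3]}) :
  (\sum_(i <- s) f i) ^+ #|F| = \sum_(i <- s) f i ^+ #|F|.
Proof.
have [p cp pn] := card_pnat.
have pn' : [pchar {mpoly F[3]}].-nat #|F|.
  apply: sub_in_pnat pn => r _; rewrite inE => /eqP ->.
  by rewrite (pchar_lalg {mpoly F[3]}).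
elim: s => [|x s IH]; first by rewrite !big_nil expr0n; case: #|F| (finNzRing_gt1 F).
by rewrite !big_cons exprDn_pchar // IH.
Qed.

Lemma euler_mono (m : 'X_{1..3}) :
  \sum_(i < 3) 'X_i * ('X_[m] : P)^`M(i) = (mdeg m)%:R *: 'X_[m].
Proof.
rewrite mdegE natr_sum scaler_suml; apply: eq_bigr => i _.
rewrite mderivX -scalerAr -mpolyXD.
case: (posnP (m i)) => [->|mi]; first by rewrite !scale0r.
congr (_ *: 'X_[_]); apply/mnmP => j; rewrite mnmDE mnmBE mnm1E.
by case: eqP => [<-|]; rewrite ?subn0 // add1n subn1 prednK.
Qed.

Lemma frob_mono (m : 'X_{1..3}) q : mdeg m = 1%N ->
  \sum_(i < 3) 'X_i ^+ q * ('X_[m] : P)^`M(i) = 'X_[m] ^+ q.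
Proof.
move/eqP/mdeg1P => [j /eqP ->].
rewrite (bigD1 j) //= big1 ?addr0; last first.
  move=> i ij; by rewrite mderivX mnm1E eq_sym (negbTE ij) scale0r mulr0.

rewrite mderivX mnm1E eqxx scale1r.
have -> : (U_(j) - U_(j) = 0)%MM by apply/mnmP => k; rewrite mnmBE subnn mnm0E.
by rewrite mpolyX0 mulr1.
Qed.
Lemma vf_lin (d : 'I_3 -> P) (s : seq 'X_{1..3}) (c : 'X_{1..3} -> F) :
  vf_apply d (\sum_(m <- s) c m *: 'X_[m]) = \sum_(m <- s) c m *: vf_apply d 'X_[m].
Proof.
rewrite /vf_apply; under eq_bigr do rewrite raddf_sum mulr_sumr.
rewrite exchange_big /=; apply: eq_bigr => m _; rewrite scaler_sumr.
by apply: eq_bigr => i _; rewrite mderivZ scalerAr.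
Qed.

Lemma euler (a : P) : a \is 1.-homog -> vf_apply (fun i => 'X_i) a = a.
Proof.
move=> /dhomogP ha; rewrite [in RHS](mpolyE a) [in LHS](mpolyE a) vf_lin big_seq [RHS]big_seq.
apply: eq_bigr => m /ha hm; rewrite /vf_apply euler_mono.
by rewrite [mdeg m]hm scale1r.
Qed.

Lemma frob (a : P) : a \is 1.-homog -> vf_apply (fun i => 'X_i ^+ #|F|) a = a ^+ #|F|.
Proof.
move=> /dhomogP ha; rewrite [in RHS](mpolyE a) [in LHS](mpolyE a) vf_lin frob_sum big_seq [RHS]big_seq.
apply: eq_bigr => m /ha hm; rewrite /vf_apply frob_mono //.
by rewrite exprZn expf_card.
Qed.

Lemma pihomogM (f h : {mpoly F[3]}) e k : h \is e.-homog ->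
  pihomog mdeg k (f * h) = if (e <= k)%N then pihomog mdeg (k - e) f * h else 0.
Proof.
move=> hh.
pose N := (msize f + k).+1.
rewrite [in LHS](@pihomog_partitionE _ _ mdeg N f); last by rewrite /N; lia.
rewrite mulr_suml raddf_sum /=.
rewrite (eq_bigr (fun d : 'I_N => if (d + e == k)%N then pihomog mdeg d f * h else 0)); last first.
  move=> d _; have hd := dhomogM (pihomogP mdeg d f) hh.
  case: eqP => [<-|/eqP ne]; [exact: pihomog_dE | exact: pihomog_ne0 ne hd].
case: leqP => ek.
- have lt : (k - e < N)%N by rewrite /N; lia.
  rewrite (bigD1 (Ordinal lt)) //= subnK // eqxx big1 ?addr0 // => d ne.
  case: eqP => // de; case/eqP: ne; apply: val_inj => /=; lia.
- rewrite big1 // => d _; case: eqP => // de; lia.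
Qed.

End S.

Theorem mainTheorem4 (F : finFieldType) (A : seq {mpoly F[3]}) (d2 d3 : nat) :
  arrangement A -> essential A ->
  free_with_exponents A [:: 1%N; d2; d3] -> (d2 <= d3)%N ->
  (d2 <= #|F|)%N.
Proof.
move=> [hlin _] _ [_ [theta [[hlog hspan hind] hdeg]]] d23.
rewrite leqNgt; apply/negP => qd2.
have q1 : (1 < #|F|)%N := finNzRing_gt1 F.
have logE : logder A (fun i => 'X_i).
  move=> a /hlin [_ ha]; exists 1; by rewrite mulr1 euler.
have logF : logder A (fun i => 'X_i ^+ #|F|).
  move=> a /hlin [_ ha]; exists (a ^+ (#|F|).-1).
  by rewrite frob // -exprS prednK //; lia.
have key : forall (f : 'I_3 -> {mpoly F[3]}) k i, (k < d2)%N -> (0 < k)%N ->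
    pihomog mdeg k (\sum_(j < 3) f j * theta j i) =
    pihomog mdeg (k - 1) (f ord0) * theta ord0 i.
  move=> f k i kd k0; rewrite raddf_sum (bigD1 ord0) //= big1 ?addr0.
    by rewrite (@pihomogM _ _ _ _ _ (hdeg ord0 i)) /= k0.
  move=> j j0; rewrite (@pihomogM _ _ _ _ _ (hdeg j i)).
  have : (d2 <= nth 0%N [:: 1%N; d2; d3] j)%N.
    case: j j0 => [[|[|[|]]] //=] ? _; lia.
  by move=> hd; rewrite leqNgt (leq_trans kd hd).
have [fE hE] := hspan _ logE.
have [fF hF] := hspan _ logF.
set c := pihomog mdeg 0 (fE ord0).
set g := pihomog mdeg (#|F| - 1) (fF ord0).
have hXi : forall i : 'I_3, 'X_i = c * theta ord0 i.
  move=> i; have := congr1 (pihomog mdeg 1) (hE i).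
  have hX : ('X_i : {mpoly F[3]}) \is 1.-homog by rewrite dhomogX; apply/eqP; exact: mdeg1.
  by rewrite key; [rewrite pihomog_dE // subnn | lia | lia].
have hXq : forall i : 'I_3, 'X_i ^+ #|F| = g * theta ord0 i.
  move=> i; have := congr1 (pihomog mdeg #|F|) (hF i).
  have hX : ('X_i : {mpoly F[3]}) \is 1.-homog by rewrite dhomogX; apply/eqP; exact: mdeg1.
  have hXn := dhomogMn #|F| hX; rewrite mul1n in hXn.
  by rewrite key; [rewrite pihomog_dE | lia | lia].
have hc : forall i : 'I_3, c * 'X_i ^+ #|F| = g * 'X_i.
  by move=> i; rewrite hXq hXi mulrCA.
pose i0 : 'I_3 := ord0.
pose i1 : 'I_3 := @Ordinal 3 1 isT.
have : c * ('X_i0 ^+ #|F| * 'X_i1 - 'X_i1 ^+ #|F| * 'X_i0) = 0.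
  rewrite mulrBr !mulrA !hc [g * 'X_i1 * _]mulrAC subrr //.
move/eqP; rewrite mulf_eq0 => /orP [/eqP c0 | ].
  have := congr1 (mcoeff U_(i0)) (hXi i0); rewrite c0 mul0r mcoeff0 mcoeffX eqxx.
  by move/eqP; rewrite oner_eq0.
rewrite subr_eq0 => /eqP h.
have := congr1 (mcoeff (U_(i0) *+ #|F| + U_(i1))%MM) h.
rewrite !mpolyXn -!mpolyXD !mcoeffX eqxx.
have -> : ((U_(i1) *+ #|F| + U_(i0))%MM == (U_(i0) *+ #|F| + U_(i1))%MM) = false.
  apply/negbTE/eqP => /mnmP /(_ i0); rewrite !mnmDE !mulmnE !mnm1E /= mul0n mul1n addn0 add0n => hh; by rewrite -hh in q1.
by move/eqP; rewrite oner_eq0.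
Qed.
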